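(* Let $f\in C^1[0,1]$ with $f(0)=0$, $h:=f'$, and let $q$ satisfy condition (q). If $$c>\sup_{\varphi\in(0,1]}\frac{f(\varphi)}{\varphi}+2\sqrt{\sup_{\varphi\in(0,1]}\frac{q(\varphi)}{\varphi}},$$ then there exists $z\in C[0,1]\cap C^1(0,1)$ with $\dot z(\varphi)=h(\varphi)-c-q(\varphi)/z(\varphi)$ and $z(\varphi)<0$ for $\varphi\in(0,1)$, and $z(0)=z(1)=0$.
   Context: Condition (q): $q\in C[0,1]$, $q>0$ on $(0,1)$, $q(0)=q(1)=0$, and $\limsup_{\varphi\to0^+}q(\varphi)/\varphi<+\infty$. *)

(* Defs.v *)
From Stdlib Require Import Reals.
From Coquelicot Require Import Coquelicot.
Open Scope R_scope.

Definition I01 (x : R) : Prop := 0 <= x <= 1.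
Definition Io01 (x : R) : Prop := 0 < x < 1.

Definition cont_on01 (g : R -> R) : Prop :=
  forall x, I01 x -> filterlim g (within I01 (locally x)) (locally (g x)).

Definition C1_on01 (f h : R -> R) : Prop :=
  (forall x, I01 x ->
     filterlim (fun y => (f y - f x) / (y - x))
       (within (fun y => I01 y /\ y <> x) (locally x)) (locally (h x)))
  /\ cont_on01 h.

(* Condition (q): q in C[0,1], q > 0 on (0,1), q(0)=q(1)=0 and
   limsup_{phi -> 0+} q(phi)/phi < +oo (i.e. q(phi)/phi is bounded above
   on some right neighbourhood (0,delta) of 0). *)
Definition cond_q (q : R -> R) : Prop :=
  cont_on01 q
  /\ (forall x, Io01 x -> 0 < q x)
  /\ q 0 = 0 /\ q 1 = 0
  /\ exists M delta, 0 < delta /\ forall phi, 0 < phi < delta -> q phi / phi <= M.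

Definition ratio_set (g : R -> R) : R -> Prop :=
  fun y => exists phi, 0 < phi <= 1 /\ y = g phi / phi.

(* Main.v *)
Require Import Defs.
From Stdlib Require Import Reals Lra Lia Classical ZArith.
From Coquelicot Require Import Coquelicot.
Open Scope R_scope.
Set Bullet Behavior "Strict Subproofs".

Lemma mono_le (g dg : R -> R) (a b : R) :
  a <= b ->
  (forall t, a < t < b -> is_derive g t (dg t)) ->
  (forall t, a <= t <= b -> continuity_pt g t) ->
  (forall t, a < t < b -> dg t <= 0) -> g b <= g a.
Proof.
  intros Hab Hd Hc Hs.
  destruct (Req_dec a b) as [->|Hne]; [lra|].
  assert (pr1 : forall c, a < c < b -> derivable_pt g c).
  { intros c Pc. exists (dg c). apply is_derive_Reals. now apply Hd. }
  assert (pr2 : forall c, a < c < b -> derivable_pt id c).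
  { intros c Pc. apply derivable_pt_id. }
  destruct (MVT g id a b pr1 pr2 ltac:(lra) Hc) as [c [P HM]].
  { intros; apply derivable_continuous_pt, derivable_pt_id. }

  assert (E1 : derive_pt g c (pr1 c P) = dg c).
  { apply derive_pt_eq_0. apply is_derive_Reals. now apply Hd. }
  assert (E2 : derive_pt id c (pr2 c P) = 1).
  { apply derive_pt_eq_0. apply derivable_pt_lim_id. }
  rewrite E1, E2 in HM. unfold id in HM. specialize (Hs c P).
  assert ((b - a) * dg c <= 0) by (apply Rmult_le_0_l; lra). lra.
Qed.

Lemma cont_eps (g : R -> R) (x : R) :
  continuity_pt g x -> forall eps, 0 < eps -> exists d, 0 < d /\
    forall y, Rabs (y - x) < d -> Rabs (g y - g x) < eps.
Proof.
  intros H eps Heps. destruct (H eps Heps) as [d [Hd H2]].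
  exists d; split; auto. intros y Hy.
  destruct (Req_dec y x) as [->|Hne].
  - rewrite Rminus_diag, Rabs_R0; auto.
  - apply (H2 y). split; [split; [exact I| auto]|]. exact Hy.
Qed.

Lemma eps_cont (g : R -> R) (x : R) :
  (forall eps, 0 < eps -> exists d, 0 < d /\
    forall y, Rabs (y - x) < d -> Rabs (g y - g x) < eps) -> continuity_pt g x.
Proof.
  intros H eps Heps. destruct (H eps Heps) as [d [Hd H2]].
  exists d; split; auto. intros y [_ Hy]. apply H2. exact Hy.
Qed.

Lemma pos_up (g dg : R -> R) (a b : R) :
  a <= b ->
  (forall t, a < t < b -> is_derive g t (dg t)) ->
  (forall t, a <= t <= b -> continuity_pt g t) ->
  (forall t, a < t < b -> 0 < g t -> 0 <= dg t) -> 0 < g a -> g a <= g b.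
Proof.
  intros Hab Hd Hc Hs Ha.
  set (E := fun u => a <= u <= b /\ forall v, a <= v <= u -> 0 < g v).
  assert (HE : bound E) by (exists b; intros u [Hu _]; lra).
  assert (HE0 : exists u, E u).
  { exists a. split; [lra|]. intros v Hv. replace v with a by lra. exact Ha. }
  destruct (completeness E HE HE0) as [s [Hub Hlub]].
  assert (Has : a <= s) by (apply Hub; split; [lra|]; intros v Hv; replace v with a by lra; exact Ha).
  assert (Hsb : s <= b) by (apply Hlub; intros u [Hu _]; lra).
  assert (Hbel : forall v, a <= v < s -> 0 < g v).
  { intros v Hv. destruct (classic (exists u, E u /\ v <= u)) as [[u [[Hu1 Hu2] Hvu]]|Hn].
    - apply Hu2; lra.
    - exfalso. assert (s <= v); [|lra]. apply Hlub. intros u Hu.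
      destruct (Rle_dec u v) as [|Hnl]; auto. exfalso; apply Hn; exists u; split; auto; lra. }
  assert (Hgs : g a <= g s).
  { assert (- g s <= - g a); [|lra].
    apply (mono_le (fun x => - g x) (fun x => - dg x) a s Has).
    - intros t Ht. apply (is_derive_opp g). apply Hd; lra.
    - intros t Ht. apply continuity_pt_opp. apply Hc; lra.
    - intros t Ht. assert (0 <= dg t); [|lra]. apply Hs; [lra|]. apply Hbel; lra. }
  destruct (Req_dec s b) as [<-|Hsb']; auto.
  exfalso.
  destruct (cont_eps g s (Hc s ltac:(lra)) (g s) ltac:(lra)) as [d [Hd0 Hd1]].
  assert (s + Rmin (d/2) ((b - s)/2) <= s); [|pose proof (Rmin_glb_lt (d/2) ((b-s)/2) 0); 
     assert (0 < Rmin (d/2) ((b-s)/2)) by (apply Rmin_glb_lt; lra); lra].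
  apply Hub. split.
  - split; [assert (0 < Rmin (d/2) ((b-s)/2)) by (apply Rmin_glb_lt; lra); lra|].
    pose proof (Rmin_r (d/2) ((b-s)/2)); lra.
  - intros v Hv. destruct (Rlt_dec v s) as [Hl|Hl]. apply Hbel; lra.
    pose proof (Rmin_l (d/2) ((b-s)/2)).
    assert (Rabs (g v - g s) < g s) by (apply Hd1; rewrite Rabs_right; lra).
    rewrite Rabs_lt_between in H0. lra.
Qed.

Lemma strict_barrier (g dg : R -> R) (a b : R) :
  a <= b ->
  (forall t, a < t < b -> is_derive g t (dg t)) ->
  (forall t, a <= t <= b -> continuity_pt g t) ->
  (forall t, a < t < b -> 0 <= g t -> 0 < dg t) -> g b <= 0 ->
  forall t, a < t < b -> g t < 0.
Proof.
  intros Hab Hd Hc Hs Hb t Ht.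
  destruct (Rlt_dec (g t) 0) as [|Hn]; auto. exfalso.
  assert (H0 : 0 <= g t) by lra.
  pose proof (Hs t Ht H0) as Hs0. pose proof (Hd t Ht) as Hdt.
  apply is_derive_Reals in Hdt.
  destruct (Hdt (dg t) Hs0) as [d Hd2].
  set (e := Rmin (d/2) ((b - t)/2)).
  assert (He : 0 < e) by (apply Rmin_glb_lt; destruct d; simpl; lra).
  assert (He1 : e <= d/2) by apply Rmin_l. assert (He2 : e <= (b-t)/2) by apply Rmin_r.
  assert (Hq : Rabs ((g (t + e) - g t) / e - dg t) < dg t).
  { apply Hd2; [lra|]. rewrite Rabs_right; lra. }
  rewrite Rabs_lt_between in Hq.
  assert (0 < (g (t + e) - g t) / e) by lra.
  assert (0 < g (t+e) - g t).
  { replace (g (t + e) - g t) with (((g (t + e) - g t) / e) * e) by (field; lra).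
    apply Rmult_lt_0_compat; lra. }
  assert (g (t + e) <= g b); [|lra].
  apply (pos_up g dg (t+e) b); try lra.
  - intros; apply Hd; lra.
  - intros; apply Hc; lra.
  - intros; apply Rlt_le, Hs; lra.
Qed.

Lemma derive_cont_pt (f : R -> R) x l : is_derive f x l -> continuity_pt f x.
Proof.
  intros H. apply continuity_pt_filterlim. apply (ex_derive_continuous f x). exists l; exact H.
Qed.

Lemma unif_cont (u : nat -> R -> R) (y : R -> R) (a b x : R) :
  a < x < b -> (forall n, continuity_pt (u n) x) ->
  (forall eps, 0 < eps -> exists N, forall n, (N <= n)%nat -> forall t, a < t < b ->
      Rabs (u n t - y t) <= eps) -> continuity_pt y x.
Proof.
  intros Hx Hc Hu. apply eps_cont. intros eps Heps.
  destruct (Hu (eps/4) ltac:(lra)) as [N HN].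
  destruct (cont_eps (u N) x (Hc N) (eps/4) ltac:(lra)) as [d [Hd Hd1]].
  exists (Rmin d (Rmin (x - a) (b - x))). split.
  { repeat apply Rmin_glb_lt; lra. }
  intros t Ht.
  pose proof (Rmin_l d (Rmin (x - a) (b - x))).
  pose proof (Rmin_r d (Rmin (x - a) (b - x))).
  pose proof (Rmin_l (x - a) (b - x)). pose proof (Rmin_r (x - a) (b - x)).
  assert (Htab : a < t < b) by (rewrite Rabs_lt_between in Ht; lra).
  pose proof (HN N (le_n N) t Htab). pose proof (HN N (le_n N) x Hx).
  assert (Rabs (u N t - u N x) < eps / 4) by (apply Hd1; lra).
  rewrite Rabs_le_between in H3, H4. rewrite Rabs_lt_between in H5 |- *. lra.
Qed.

Lemma lim_le_aux (v : nat -> R) (l c : R) (N : nat) :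
  is_lim_seq v l -> (forall n, (N <= n)%nat -> v n <= c) -> l <= c.
Proof.
  intros Hl Hv.
  apply (is_lim_seq_incr_n v N l) in Hl.
  assert (H := is_lim_seq_le (fun n => v (n + N)%nat) (fun _ => c) l c).
  simpl in H. apply H; auto.
  - intros n; apply Hv; lia.
  - apply is_lim_seq_const.
Qed.

Lemma lim_ge_aux (v : nat -> R) (l c : R) (N : nat) :
  is_lim_seq v l -> (forall n, (N <= n)%nat -> c <= v n) -> c <= l.
Proof.
  intros Hl Hv.
  apply (is_lim_seq_incr_n v N l) in Hl.
  assert (H := is_lim_seq_le (fun _ => c) (fun n => v (n + N)%nat) c l).
  simpl in H. apply H; auto.
  - intros n; apply Hv; lia.
  - apply is_lim_seq_const.
Qed.

Lemma deriv_limit (u du : nat -> R -> R) (y g : R -> R) (a b x : R) :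
  a < x < b ->
  (forall n t, a < t < b -> is_derive (u n) t (du n t)) ->
  (forall t, a < t < b -> is_lim_seq (fun n => u n t) (y t)) ->
  (forall eps, 0 < eps -> exists N, forall n, (N <= n)%nat -> forall t, a < t < b ->
      Rabs (du n t - g t) <= eps) ->
  continuity_pt g x -> is_derive y x (g x).
Proof.
  intros Hx Hd Hl Hu Hg. apply is_derive_Reals. intros eps Heps.
  destruct (Hu (eps/4) ltac:(lra)) as [N HN].
  destruct (cont_eps g x Hg (eps/4) ltac:(lra)) as [d [Hd0 Hd1]].
  assert (Hdel : 0 < Rmin d (Rmin (x - a) (b - x))) by (repeat apply Rmin_glb_lt; lra).
  exists (mkposreal _ Hdel). intros h Hh0 Hh. simpl in Hh.
  pose proof (Rmin_l d (Rmin (x - a) (b - x))).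
  pose proof (Rmin_r d (Rmin (x - a) (b - x))).
  pose proof (Rmin_l (x - a) (b - x)). pose proof (Rmin_r (x - a) (b - x)).
  assert (Hxh : a < x + h < b) by (rewrite Rabs_lt_between in Hh; lra).
  assert (Hq : is_lim_seq (fun n => (u n (x + h) - u n x) / h) ((y (x + h) - y x) / h)).
  { apply (is_lim_seq_scal_r _ (/ h) ((y (x + h) - y x))).
    apply (is_lim_seq_minus _ _ (y (x+h)) (y x)); auto. reflexivity. }
  assert (Hb : forall n, (N <= n)%nat ->
     Rabs ((u n (x + h) - u n x) / h - g x) <= eps / 2).
  { intros n Hn.
    destruct (MVT_gen (u n) x (x + h) (du n)) as [c [Hc Hc2]].
    - intros t Ht. apply Hd. split.
      + apply Rle_lt_trans with (Rmin x (x + h)); [|lra]. apply Rmin_glb; lra.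
      + apply Rlt_le_trans with (Rmax x (x + h)); [lra|]. apply Rmax_lub; lra.
    - intros t Ht. apply (derive_cont_pt _ _ (du n t)). apply Hd. split.
      + apply Rlt_le_trans with (Rmin x (x + h)); [|lra]. apply Rmin_glb_lt; lra.
      + apply Rle_lt_trans with (Rmax x (x + h)); [lra|]. apply Rmax_lub_lt; lra.
    - assert (Hcx : Rabs (c - x) <= Rabs h).
      { destruct Hc as [Hc1 Hc3]. unfold Rmin, Rmax in Hc1, Hc3.
        destruct (Rle_dec x (x + h)); rewrite Rabs_le_between;
        split; rewrite ?Rabs_right, ?Rabs_left by lra; lra. }
      assert (Hcab : a < c < b).
      { rewrite Rabs_le_between in Hcx. rewrite Rabs_lt_between in Hh.
        destruct (Rle_dec 0 h); [rewrite Rabs_right in Hcx by lra|rewrite Rabs_left in Hcx by lra]; lra. }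
      rewrite Hc2. replace (du n c * (x + h - x) / h) with (du n c) by (field; auto).
      pose proof (HN n Hn c Hcab).
      assert (Rabs (g c - g x) < eps / 4) by (apply Hd1; lra).
      rewrite Rabs_le_between in H3 |- *. rewrite Rabs_lt_between in H4. lra. }
  assert (Hup : (y (x + h) - y x) / h <= g x + eps / 2).
  { apply (lim_le_aux _ _ _ N Hq). intros n Hn. specialize (Hb n Hn).
    rewrite Rabs_le_between in Hb. lra. }
  assert (Hlo : g x - eps / 2 <= (y (x + h) - y x) / h).
  { apply (lim_ge_aux _ _ _ N Hq). intros n Hn. specialize (Hb n Hn).
    rewrite Rabs_le_between in Hb. lra. }
  rewrite Rabs_lt_between. lra.
Qed.

Definition clamp (x : R) : R := Rmax 0 (Rmin 1 x).

Lemma clamp_lip x y : Rabs (clamp x - clamp y) <= Rabs (x - y).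
Proof.
  unfold clamp, Rmax, Rmin.
  repeat (destruct Rle_dec); rewrite ?Rminus_diag, ?Rabs_R0; try apply Rabs_pos;
  try (rewrite (Rabs_right (x - y)) by lra); try (rewrite (Rabs_left (x - y)) by lra);
  try (rewrite (Rabs_right (x - y)) by lra);
  repeat match goal with |- context [Rabs ?e] =>
    destruct (Rle_dec 0 e); [rewrite (Rabs_right e) by lra|rewrite (Rabs_left e) by lra] end; lra.
Qed.

Lemma clamp_cont x : continuity_pt clamp x.
Proof.
  apply eps_cont. intros eps Heps. exists eps; split; auto.
  intros y Hy. eapply Rle_lt_trans; [apply clamp_lip|exact Hy].
Qed.

Lemma clamp_id x : 0 <= x <= 1 -> clamp x = x.
Proof. intros H. unfold clamp, Rmax, Rmin. repeat destruct Rle_dec; lra. Qed.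

Lemma clamp_in x : 0 <= clamp x <= 1.
Proof. unfold clamp, Rmax, Rmin. repeat destruct Rle_dec; lra. Qed.

Lemma clamp_idem x : clamp (clamp x) = clamp x.
Proof. apply clamp_id, clamp_in. Qed.

Lemma cont_to_coq (f : R -> R) x : continuity_pt f x -> continuous f x.
Proof. intros H. apply continuity_pt_filterlim in H. exact H. Qed.

Lemma RInt_deriv_all (f : R -> R) :
  (forall x, continuity_pt f x) -> forall x, is_derive (fun b => RInt f 1 b) x (f x).
Proof.
  intros Hf x. apply (is_derive_RInt f (fun b => RInt f 1 b) 1 x).
  - apply filter_forall. intros b. apply (RInt_correct (V := R_CompleteNormedModule)). apply (ex_RInt_continuous (V := R_CompleteNormedModule)).
    intros z _. apply cont_to_coq, Hf.
  - apply cont_to_coq, Hf.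
Qed.

Fixpoint pic (G : R -> R -> R) (k : nat) : R -> R :=
  match k with
  | O => fun _ => 0
  | S k => fun x => RInt (fun s => G s (pic G k s)) 1 (clamp x)
  end.

Definition Gcont (G : R -> R -> R) : Prop :=
  forall u, (forall x, continuity_pt u x) -> forall x, continuity_pt (fun s => G s (u s)) x.

Lemma pic_cont G : Gcont G -> forall k x, continuity_pt (pic G k) x.
Proof.
  intros HG k. induction k as [|k IH]; intros x; simpl.
  - apply continuity_pt_const. intros a b; reflexivity.
  - apply (continuity_pt_comp clamp (fun b => RInt (fun s => G s (pic G k s)) 1 b)).
    + apply clamp_cont.
    + apply (derive_cont_pt _ _ _ (RInt_deriv_all _ (HG _ IH) _)).
Qed.

Lemma pic_deriv G : Gcont G -> forall k x, 0 < x < 1 ->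
  is_derive (pic G (S k)) x (G x (pic G k x)).
Proof.
  intros HG k x Hx.
  apply (is_derive_ext_loc (fun b => RInt (fun s => G s (pic G k s)) 1 b)).
  - assert (Hd : 0 < Rmin x (1 - x)) by (apply Rmin_glb_lt; lra).
    exists (mkposreal _ Hd). intros y Hy. simpl. rewrite clamp_id; auto.
    unfold ball in Hy; simpl in Hy; unfold AbsRing_ball, abs, minus, plus, opp in Hy; simpl in Hy.
    pose proof (Rmin_l x (1 - x)). pose proof (Rmin_r x (1 - x)).
    rewrite Rabs_lt_between in Hy. lra.
  - apply (RInt_deriv_all (fun s => G s (pic G k s)) (HG _ (pic_cont G HG k))).
Qed.

Lemma pic_one G k : pic G k 1 = 0.
Proof. destruct k; simpl; auto. rewrite clamp_id by lra. apply (RInt_point (V := R_CompleteNormedModule)). Qed.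

Lemma bound_by_deriv (D W dD dW : R -> R) (x : R) :
  0 <= x <= 1 ->
  (forall t, x < t < 1 -> is_derive D t (dD t)) ->
  (forall t, x < t < 1 -> is_derive W t (dW t)) ->
  (forall t, x <= t <= 1 -> continuity_pt D t) ->
  (forall t, x <= t <= 1 -> continuity_pt W t) ->
  (forall t, x < t < 1 -> Rabs (dD t) <= - dW t) ->
  D 1 = 0 -> 0 <= W 1 -> Rabs (D x) <= W x.
Proof.
  intros Hx HD HW HcD HcW Hb H1 H2.
  assert (A1 : (fun t => W t - D t) 1 <= (fun t => W t - D t) x).
  { apply (mono_le (fun t => W t - D t) (fun t => dW t - dD t) x 1); [lra| | |].
    - intros t Ht. apply (is_derive_minus W D); auto.
    - intros t Ht. apply continuity_pt_minus; auto.
    - intros t Ht. specialize (Hb t Ht). rewrite Rabs_le_between in Hb. lra. }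
  assert (A2 : (fun t => W t + D t) 1 <= (fun t => W t + D t) x).
  { apply (mono_le (fun t => W t + D t) (fun t => dW t + dD t) x 1); [lra| | |].
    - intros t Ht. apply (is_derive_plus W D); auto.
    - intros t Ht. apply continuity_pt_plus; auto.
    - intros t Ht. specialize (Hb t Ht). rewrite Rabs_le_between in Hb. lra. }
  simpl in A1, A2. rewrite Rabs_le_between. lra.
Qed.

Definition Wk (L B : R) (k : nat) (x : R) : R := B / (2 * L) * (/2) ^ k * exp (2 * L * (1 - x)).

Lemma Wk_deriv L B k x : is_derive (Wk L B k) x (- (2 * L) * Wk L B k x).
Proof. unfold Wk. auto_derive; auto. replace (1 + - x) with (1 - x) by ring. ring. Qed.

Lemma Wk_cont L B k x : continuity_pt (Wk L B k) x.
Proof. apply (derive_cont_pt _ _ _ (Wk_deriv L B k x)). Qed.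

Lemma Wk_succ L B k x : 0 < L -> 2 * L * Wk L B (S k) x = L * Wk L B k x.
Proof. intros HL. unfold Wk. simpl. field. lra. Qed.

Lemma pic_diff G L B : Gcont G -> 0 < L ->
  (forall s y1 y2, Rabs (G s y1 - G s y2) <= L * Rabs (y1 - y2)) ->
  (forall s y, Rabs (G s y) <= B) ->
  forall k x, 0 <= x <= 1 -> Rabs (pic G (S k) x - pic G k x) <= Wk L B k x.
Proof.
  intros HG HL HLip HB k. induction k as [|k IH]; intros x Hx.
  - apply (bound_by_deriv (fun t => pic G 1 t - pic G 0 t) (Wk L B 0)
             (fun t => G t (pic G 0 t) - 0) (fun t => - (2 * L) * Wk L B 0 t) x Hx).
    + intros t Ht. apply (is_derive_minus (pic G 1) (pic G 0)).
      apply pic_deriv; auto; lra. simpl. apply (is_derive_const (K := R_AbsRing) (V := R_NormedModule) 0).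
    + intros; apply Wk_deriv.
    + intros t Ht. apply continuity_pt_minus; apply pic_cont; auto.
    + intros; apply Wk_cont.
    + intros t Ht. rewrite Rminus_0_r. eapply Rle_trans; [apply HB|].
      unfold Wk. simpl.
      assert (1 <= exp (2 * L * (1 - t))).
      { pose proof (exp_ineq1_le (2 * L * (1 - t))). assert (0 <= 2 * L * (1 - t)) by (apply Rmult_le_pos; lra). lra. }
      assert (0 <= B) by (specialize (HB 0 0); pose proof (Rabs_pos (G 0 0)); lra).
      replace (- (- (2 * L) * (B / (2 * L) * 1 * exp (2 * L * (1 - t))))) with
         (B * exp (2 * L * (1 - t))) by (field; lra).
      rewrite <- (Rmult_1_r B) at 1. apply Rmult_le_compat_l; lra.
    + rewrite !pic_one. ring.
    + unfold Wk. apply Rmult_le_pos; [|apply Rlt_le, exp_pos].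
      assert (0 <= B) by (specialize (HB 0 0); pose proof (Rabs_pos (G 0 0)); lra).
      simpl. rewrite Rmult_1_r. apply Rmult_le_pos; [lra|]. apply Rlt_le, Rinv_0_lt_compat; lra.
  - apply (bound_by_deriv (fun t => pic G (S (S k)) t - pic G (S k) t) (Wk L B (S k))
             (fun t => G t (pic G (S k) t) - G t (pic G k t)) (fun t => - (2 * L) * Wk L B (S k) t) x Hx).
    + intros t Ht. apply (is_derive_minus (pic G (S (S k))) (pic G (S k)));
      apply pic_deriv; auto; lra.
    + intros tt Htt; exact (Wk_deriv L B (S k) tt).
    + intros t Ht. apply continuity_pt_minus; apply pic_cont; auto.
    + intros; apply Wk_cont.
    + intros t Ht. eapply Rle_trans; [apply HLip|].
      replace (- (- (2 * L) * Wk L B (S k) t)) with (2 * L * Wk L B (S k) t) by ring.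
      rewrite Wk_succ by auto. apply Rmult_le_compat_l; [lra|]. apply IH; lra.
    + rewrite !pic_one. ring.
    + unfold Wk. apply Rmult_le_pos; [|apply Rlt_le, exp_pos].
      assert (0 <= B) by (specialize (HB 0 0); pose proof (Rabs_pos (G 0 0)); lra).
      apply Rmult_le_pos; [apply Rmult_le_pos; [lra|]; apply Rlt_le, Rinv_0_lt_compat; lra|].
      apply pow_le. lra.
Qed.

Lemma small_pow (M : R) : 0 <= M -> forall eps, 0 < eps -> exists N, forall n, (N <= n)%nat ->
  M * (/2) ^ n <= eps.
Proof.
  intros HM eps Heps.
  destruct (pow_lt_1_zero (/2) ltac:(rewrite Rabs_right; lra) (eps / (M + 1)))
    as [N HN]. { apply Rdiv_lt_0_compat; lra. }
  exists N. intros n Hn. specialize (HN n Hn).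
  rewrite Rabs_right in HN by (apply Rle_ge, pow_le; lra).
  assert (0 <= (/2)^n) by (apply pow_le; lra).
  apply Rle_trans with ((M + 1) * (/ 2) ^ n).
  - apply Rmult_le_compat_r; lra.
  - apply Rlt_le. replace eps with ((M + 1) * (eps / (M + 1))) by (field; lra).
    apply Rmult_lt_compat_l; lra.
Qed.

Lemma Wk_le L B k x : 0 < L -> 0 <= B -> 0 <= x <= 1 ->
  Wk L B k x <= B / (2 * L) * exp (2 * L) * (/2) ^ k.
Proof.
  intros HL HB Hx. unfold Wk.
  assert (exp (2 * L * (1 - x)) <= exp (2 * L)).
  { destruct (Req_dec x 0) as [->|Hx0].
    - rewrite Rminus_0_r, Rmult_1_r. lra.
    - apply Rlt_le, exp_increasing. nra. }
  assert (0 <= B / (2 * L)) by (apply Rmult_le_pos; [lra|apply Rlt_le, Rinv_0_lt_compat; lra]).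
  assert (0 <= (/2) ^ k) by (apply pow_le; lra).
  replace (B / (2 * L) * exp (2 * L) * (/ 2) ^ k) with (B / (2 * L) * (/ 2) ^ k * exp (2 * L)) by ring.
  apply Rmult_le_compat_l; auto. apply Rmult_le_pos; auto.
Qed.

Definition ysol (G : R -> R -> R) (x : R) : R := Lim_seq (fun k => pic G k (clamp x)).


Lemma pic_cauchy G L B : Gcont G -> 0 < L ->
  (forall s y1 y2, Rabs (G s y1 - G s y2) <= L * Rabs (y1 - y2)) ->
  (forall s y, Rabs (G s y) <= B) ->
  forall x, 0 <= x <= 1 -> forall k j,
  Rabs (pic G (k + j) x - pic G k x) <= 2 * (B / (2 * L) * exp (2 * L)) * ((/2) ^ k - (/2) ^ (k + j)).
Proof.
  intros HG HL HLip HB x Hx k j.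
  assert (0 <= B) by (specialize (HB 0 0); pose proof (Rabs_pos (G 0 0)); lra).
  induction j as [|j IH].
  - rewrite Nat.add_0_r, Rminus_diag, Rabs_R0, Rminus_diag, Rmult_0_r. lra.
  - rewrite Nat.add_succ_r.
    pose proof (pic_diff G L B HG HL HLip HB (k + j) x Hx).
    pose proof (Wk_le L B (k + j) x HL H Hx).
    replace (pic G (S (k + j)) x - pic G k x) with
      ((pic G (S (k + j)) x - pic G (k + j) x) + (pic G (k + j) x - pic G k x)) by ring.
    eapply Rle_trans; [apply Rabs_triang|].
    change ((/2) ^ (S (k + j))) with (/2 * (/2) ^ (k + j)).
    set (K := B / (2 * L) * exp (2 * L)) in *. set (p := (/2) ^ (k + j)) in *.
    set (a := (/2) ^ k) in *. lra.
Qed.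

Lemma ysol_lim G L B : Gcont G -> 0 < L ->
  (forall s y1 y2, Rabs (G s y1 - G s y2) <= L * Rabs (y1 - y2)) ->
  (forall s y, Rabs (G s y) <= B) ->
  forall x, 0 <= x <= 1 -> is_lim_seq (fun k => pic G k x) (ysol G x) /\
    forall k, Rabs (pic G k x - ysol G x) <= 2 * (B / (2 * L) * exp (2 * L)) * (/2) ^ k.
Proof.
  intros HG HL HLip HB x Hx.
  assert (HB0 : 0 <= B) by (specialize (HB 0 0); pose proof (Rabs_pos (G 0 0)); lra).
  assert (HM : 0 <= 2 * (B / (2 * L) * exp (2 * L))).
  { apply Rmult_le_pos; [lra|]. apply Rmult_le_pos; [|apply Rlt_le, exp_pos].
    apply Rmult_le_pos; [lra|apply Rlt_le, Rinv_0_lt_compat; lra]. }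
  assert (Hc := pic_cauchy G L B HG HL HLip HB x Hx).
  set (M := 2 * (B / (2 * L) * exp (2 * L))) in *.
  assert (Hex : ex_finite_lim_seq (fun k => pic G k x)).
  { apply ex_lim_seq_cauchy_corr. intros eps.
    destruct (small_pow M HM (eps/4) ltac:(destruct eps; simpl; lra)) as [N HN].
    exists N. intros n m Hn Hm.
    assert (Hp : forall p, (N <= p)%nat -> Rabs (pic G p x - pic G N x) <= eps / 4).
    { intros p Hp. replace p with (N + (p - N))%nat by lia.
      eapply Rle_trans; [apply Hc|].
      assert (0 <= M * (/2) ^ (N + (p - N))) by (apply Rmult_le_pos; [lra|apply pow_le; lra]).
      specialize (HN N (le_n N)). rewrite Rmult_minus_distr_l. lra. }
    pose proof (Hp n Hn). pose proof (Hp m Hm). destruct eps as [e He]; simpl in *.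
    replace (pic G n x - pic G m x) with ((pic G n x - pic G N x) - (pic G m x - pic G N x)) by ring.
    eapply Rle_lt_trans; [apply Rabs_triang|]. rewrite Rabs_Ropp. lra. }
  assert (Hl : is_lim_seq (fun k => pic G k x) (ysol G x)).
  { unfold ysol. rewrite clamp_id by auto. destruct Hex as [l Hl].
    rewrite (is_lim_seq_unique _ _ Hl). exact Hl. }
  split; auto.
  intros k.
  assert (Hl2 : is_lim_seq (fun n => pic G n x - pic G k x) (ysol G x - pic G k x)).
  { apply (is_lim_seq_minus _ _ (ysol G x) (pic G k x)); auto. apply is_lim_seq_const. reflexivity. }
  assert (Hb : forall n, (k <= n)%nat -> Rabs (pic G n x - pic G k x) <= M * (/2) ^ k).
  { intros n Hn. replace n with (k + (n - k))%nat by lia. eapply Rle_trans; [apply Hc|].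
    assert (0 <= M * (/2) ^ (k + (n - k))) by (apply Rmult_le_pos; [lra|apply pow_le; lra]).
    rewrite Rmult_minus_distr_l. lra. }
  rewrite Rabs_minus_sym, Rabs_le_between. split.
  - apply (lim_ge_aux _ _ _ k Hl2). intros n Hn. specialize (Hb n Hn). rewrite Rabs_le_between in Hb. lra.
  - apply (lim_le_aux _ _ _ k Hl2). intros n Hn. specialize (Hb n Hn). rewrite Rabs_le_between in Hb. lra.
Qed.

Theorem ysol_spec G L B : Gcont G -> 0 < L ->
  (forall s y1 y2, Rabs (G s y1 - G s y2) <= L * Rabs (y1 - y2)) ->
  (forall s y, Rabs (G s y) <= B) ->
  (forall x, continuity_pt (ysol G) x) /\ ysol G 1 = 0 /\
  forall x, 0 < x < 1 -> is_derive (ysol G) x (G x (ysol G x)).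
Proof.
  intros HG HL HLip HB.
  assert (HB0 : 0 <= B) by (specialize (HB 0 0); pose proof (Rabs_pos (G 0 0)); lra).
  assert (HM : 0 <= 2 * (B / (2 * L) * exp (2 * L))).
  { apply Rmult_le_pos; [lra|]. apply Rmult_le_pos; [|apply Rlt_le, exp_pos].
    apply Rmult_le_pos; [lra|apply Rlt_le, Rinv_0_lt_compat; lra]. }
  set (M := 2 * (B / (2 * L) * exp (2 * L))) in *.
  assert (Hycl : forall x, ysol G x = ysol G (clamp x)).
  { intros x. unfold ysol. rewrite clamp_idem. reflexivity. }
  assert (Hcont : forall x, continuity_pt (ysol G) x).
  { intros x. apply (unif_cont (fun k t => pic G k (clamp t)) _ (x - 1) (x + 1)); [lra| |].
    - intros n. apply (continuity_pt_comp clamp (pic G n)); [apply clamp_cont|apply pic_cont; auto].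
    - intros eps Heps. destruct (small_pow M HM eps Heps) as [N HN]. exists N.
      intros n Hn t _. rewrite (Hycl t).
      destruct (ysol_lim G L B HG HL HLip HB (clamp t) (clamp_in t)) as [_ Hb].
      eapply Rle_trans; [apply Hb|]. apply HN; auto. }
  split; auto. split.
  - unfold ysol. rewrite clamp_id by lra.
    rewrite (Lim_seq_ext _ (fun _ => 0)) by (intros; apply pic_one).
    rewrite Lim_seq_const. reflexivity.
  - intros x Hx.
    apply (deriv_limit (fun n => pic G (S n)) (fun n t => G t (pic G n t)) (ysol G)
             (fun t => G t (ysol G t)) 0 1 x Hx).
    + intros n t Ht. apply pic_deriv; auto.
    + intros t Ht. destruct (ysol_lim G L B HG HL HLip HB t ltac:(lra)) as [Hl _].
      apply (is_lim_seq_incr_1 (fun n => pic G n t)). exact Hl.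
    + intros eps Heps. destruct (small_pow (L * M) ltac:(apply Rmult_le_pos; lra) eps Heps) as [N HN].
      exists N. intros n Hn t Ht. eapply Rle_trans; [apply HLip|].
      destruct (ysol_lim G L B HG HL HLip HB t ltac:(lra)) as [_ Hb].
      specialize (Hb n). fold M in Hb. specialize (HN n Hn). rewrite Rmult_assoc in HN.
      eapply Rle_trans; [|exact HN]. apply Rmult_le_compat_l; lra.
    + apply HG. exact Hcont.
Qed.

Lemma within_eps (g : R -> R) (D : R -> Prop) x l :
  filterlim g (within D (locally x)) (locally l) ->
  forall eps, 0 < eps -> exists d, 0 < d /\ forall y, D y -> Rabs (y - x) < d -> Rabs (g y - l) < eps.
Proof.
  intros H eps Heps. apply filterlim_locally with (eps := mkposreal _ Heps) in H.
  destruct H as [d Hd]. exists d; split; [apply cond_pos|].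
  intros y Dy Hy. apply (Hd y); auto.
Qed.

Lemma eps_within (g : R -> R) (D : R -> Prop) x l :
  (forall eps, 0 < eps -> exists d, 0 < d /\ forall y, D y -> Rabs (y - x) < d -> Rabs (g y - l) < eps) ->
  filterlim g (within D (locally x)) (locally l).
Proof.
  intros H. apply filterlim_locally. intros [eps Heps].
  destruct (H eps Heps) as [d [Hd H2]]. exists (mkposreal _ Hd).
  intros y Hy Dy. apply H2; auto.
Qed.

Lemma cont01_clamp (g : R -> R) : cont_on01 g -> forall x, continuity_pt (fun x => g (clamp x)) x.
Proof.
  intros Hg x. apply eps_cont. intros eps Heps.
  destruct (within_eps g I01 (clamp x) (g (clamp x)) (Hg (clamp x) (clamp_in x)) eps Heps) as [d [Hd H]].
  exists d; split; auto. intros y Hy. apply H.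
  - apply clamp_in.
  - eapply Rle_lt_trans; [apply clamp_lip|exact Hy].
Qed.

Lemma C1_cont (f h : R -> R) : C1_on01 f h -> cont_on01 f.
Proof.
  intros [Hd _] x Hx. apply eps_within. intros eps Heps.
  destruct (within_eps _ _ x (h x) (Hd x Hx) 1 ltac:(lra)) as [d [Hd0 H]].
  exists (Rmin d (eps / (Rabs (h x) + 1))). split.
  { apply Rmin_glb_lt; auto. apply Rdiv_lt_0_compat; auto. pose proof (Rabs_pos (h x)); lra. }
  intros y Dy Hy.
  pose proof (Rmin_l d (eps / (Rabs (h x) + 1))). pose proof (Rmin_r d (eps / (Rabs (h x) + 1))).
  destruct (Req_dec y x) as [->|Hne].
  { rewrite Rminus_diag, Rabs_R0; auto. }
  assert (Hq := H y (conj Dy Hne) ltac:(lra)).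
  replace (f y - f x) with ((f y - f x) / (y - x) * (y - x)) by (field; lra).
  rewrite Rabs_mult.
  assert (Rabs ((f y - f x) / (y - x)) <= Rabs (h x) + 1).
  { replace ((f y - f x) / (y - x)) with (((f y - f x) / (y - x) - h x) + h x) by ring.
    eapply Rle_trans; [apply Rabs_triang|]. lra. }
  apply Rle_lt_trans with ((Rabs (h x) + 1) * Rabs (y - x)).
  - apply Rmult_le_compat_r; auto. apply Rabs_pos.
  - replace eps with ((Rabs (h x) + 1) * (eps / (Rabs (h x) + 1))) by
      (field; pose proof (Rabs_pos (h x)); lra).
    apply Rmult_lt_compat_l; [pose proof (Rabs_pos (h x)); lra|lra].
Qed.

Lemma C1_deriv (f h : R -> R) : C1_on01 f h -> forall x, 0 < x < 1 ->
  is_derive (fun x => f (clamp x)) x (h x).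
Proof.
  intros [Hd _] x Hx. apply is_derive_Reals. intros eps Heps.
  destruct (within_eps _ _ x (h x) (Hd x ltac:(unfold I01; lra)) eps Heps) as [d [Hd0 H]].
  assert (Hdel : 0 < Rmin d (Rmin x (1 - x))) by (repeat apply Rmin_glb_lt; lra).
  exists (mkposreal _ Hdel). intros k Hk0 Hk. simpl in Hk.
  pose proof (Rmin_l d (Rmin x (1 - x))). pose proof (Rmin_r d (Rmin x (1 - x))).
  pose proof (Rmin_l x (1 - x)). pose proof (Rmin_r x (1 - x)).
  rewrite Rabs_lt_between in Hk.
  rewrite !clamp_id by lra.
  replace k with ((x + k) - x) at 2 by ring.
  apply H.
  - split; [unfold I01; lra|]. intros E; apply Hk0; lra.
  - rewrite Rabs_lt_between; lra.
Qed.

Lemma bounded01 (g : R -> R) : (forall x, continuity_pt g x) ->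
  exists M, 0 <= M /\ forall x, 0 <= x <= 1 -> Rabs (g x) <= M.
Proof.
  intros Hg.
  destruct (continuity_ab_maj g 0 1 ltac:(lra) (fun c _ => Hg c)) as [xM [HM _]].
  destruct (continuity_ab_min g 0 1 ltac:(lra) (fun c _ => Hg c)) as [xm [Hm _]].
  exists (Rabs (g xM) + Rabs (g xm)). split.
  { pose proof (Rabs_pos (g xM)); pose proof (Rabs_pos (g xm)); lra. }
  intros x Hx. specialize (HM x Hx). specialize (Hm x Hx).
  pose proof (Rabs_pos (g xM)); pose proof (Rabs_pos (g xm)).
  pose proof (Rle_abs (g xM)). pose proof (Rle_abs (- g xm)). rewrite Rabs_Ropp in H2.
  rewrite Rabs_le_between. lra.
Qed.

Lemma deriv_pos_step (g : R -> R) t d : is_derive g t d -> 0 < d ->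
  forall eps, 0 < eps -> exists t', t < t' < t + eps /\ g t < g t'.
Proof.
  intros Hd Hpos eps Heps. apply is_derive_Reals in Hd.
  destruct (Hd d Hpos) as [dd Hd2].
  set (e := Rmin (dd/2) (eps/2)).
  assert (He : 0 < e) by (apply Rmin_glb_lt; destruct dd; simpl; lra).
  assert (He1 : e <= dd/2) by apply Rmin_l. assert (He2 : e <= eps/2) by apply Rmin_r.
  assert (Hq : Rabs ((g (t + e) - g t) / e - d) < d).
  { apply Hd2; [lra|]. rewrite Rabs_right; lra. }
  rewrite Rabs_lt_between in Hq.
  exists (t + e). split; [lra|].
  assert (0 < (g (t + e) - g t) / e) by lra.
  assert (0 < g (t+e) - g t); [|lra].
  replace (g (t + e) - g t) with (((g (t + e) - g t) / e) * e) by (field; lra).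
  apply Rmult_lt_0_compat; lra.
Qed.

Definition Gn (hh qq : R -> R) (c e : R) (s z : R) : R := hh s - c - qq s / Rmin z (- e).

Lemma Rmin_lip a b c : Rabs (Rmin a c - Rmin b c) <= Rabs (a - b).
Proof.
  unfold Rmin. repeat destruct Rle_dec;
  repeat match goal with |- context [Rabs ?e] =>
    destruct (Rle_dec 0 e); [rewrite (Rabs_right e) by lra|rewrite (Rabs_left e) by lra] end; lra.
Qed.

Lemma Gn_cont hh qq c e : 0 < e -> (forall x, continuity_pt hh x) -> (forall x, continuity_pt qq x) ->
  Gcont (Gn hh qq c e).
Proof.
  intros He Hh Hq u Hu x. unfold Gn.
  apply continuity_pt_minus; [apply continuity_pt_minus; [apply Hh|apply continuity_pt_const; intros ??; auto]|].
  apply continuity_pt_div; auto.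
  - apply eps_cont. intros eps Heps. destruct (cont_eps u x (Hu x) eps Heps) as [d [Hd H]].
    exists d; split; auto. intros y Hy. eapply Rle_lt_trans; [apply Rmin_lip|]. auto.
  - pose proof (Rmin_r (u x) (-e)). lra.
Qed.

Lemma Gn_lip hh qq c e Qm : 0 < e -> (forall x, 0 <= qq x <= Qm) ->
  forall s y1 y2, Rabs (Gn hh qq c e s y1 - Gn hh qq c e s y2) <= (Qm / (e * e) + 1) * Rabs (y1 - y2).
Proof.
  intros He Hq s y1 y2. unfold Gn.
  set (m1 := Rmin y1 (-e)). set (m2 := Rmin y2 (-e)).
  assert (H1 : m1 <= -e) by apply Rmin_r. assert (H2 : m2 <= -e) by apply Rmin_r.
  assert (Hm : Rabs (m1 - m2) <= Rabs (y1 - y2)) by apply Rmin_lip.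
  replace (hh s - c - qq s / m1 - (hh s - c - qq s / m2)) with (qq s * (m1 - m2) / (m1 * m2))
    by (field; lra).
  assert (Hp : e * e <= m1 * m2) by nra.
  unfold Rdiv. rewrite Rabs_mult, Rabs_mult, Rabs_inv.
  rewrite (Rabs_right (m1 * m2)) by nra. rewrite (Rabs_right (qq s)) by (specialize (Hq s); lra).
  specialize (Hq s).
  assert (0 < e * e) by nra.
  apply Rle_trans with (Qm / (e * e) * Rabs (y1 - y2)).
  - unfold Rdiv.
    replace (qq s * Rabs (m1 - m2) * / (m1 * m2)) with ((qq s * Rabs (m1 - m2)) * / (m1 * m2)) by ring.
    apply Rle_trans with ((qq s * Rabs (m1 - m2)) * / (e * e)).
    + apply Rmult_le_compat_l. apply Rmult_le_pos; [lra|apply Rabs_pos].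
      apply Rinv_le_contravar; lra.
    + replace (Qm * / (e * e) * Rabs (y1 - y2)) with ((Qm * Rabs (y1 - y2)) * / (e * e)) by ring.
      apply Rmult_le_compat_r; [apply Rlt_le, Rinv_0_lt_compat; lra|].
      apply Rmult_le_compat; try lra; apply Rabs_pos.
  - pose proof (Rabs_pos (y1 - y2)). nra.
Qed.

Lemma Gn_bnd hh qq c e Qm H : 0 < e -> (forall x, 0 <= qq x <= Qm) -> (forall x, Rabs (hh x - c) <= H) ->
  forall s y, Rabs (Gn hh qq c e s y) <= H + Qm / e.
Proof.
  intros He Hq Hh s y. unfold Gn.
  assert (Hm : Rmin y (-e) <= -e) by apply Rmin_r.
  specialize (Hq s). specialize (Hh s).
  eapply Rle_trans; [apply Rabs_triang|]. apply Rplus_le_compat; auto.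
  rewrite Rabs_Ropp. unfold Rdiv. rewrite Rabs_mult, Rabs_inv.
  rewrite (Rabs_right (qq s)) by lra. rewrite (Rabs_left (Rmin y (-e))) by lra.
  apply Rmult_le_compat; try lra. apply Rlt_le, Rinv_0_lt_compat; lra.
  apply Rinv_le_contravar; lra.
Qed.

Lemma inv_mono_neg a b : a <= b -> b < 0 -> / a >= / b.
Proof.
  intros Hab Hb. apply Rle_ge.
  destruct (Req_dec a b) as [->|Hne]; [lra|].
  assert (/ b - / a = (a - b) / (a * b)) by (field; lra).
  assert ((a - b) / (a * b) <= 0).
  { unfold Rdiv. apply Rmult_le_0_r; [lra|]. apply Rlt_le, Rinv_0_lt_compat. nra. }
  lra.
Qed.

Lemma negdiv_mono q a b : 0 <= q -> a <= b -> b < 0 -> - (q / a) <= - (q / b).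
Proof.
  intros Hq Hab Hb. pose proof (inv_mono_neg a b Hab Hb). unfold Rdiv. nra.
Qed.

Lemma Gn_mono hh qq c e s y1 y2 : 0 < e -> 0 <= qq s -> y1 <= y2 ->
  Gn hh qq c e s y1 <= Gn hh qq c e s y2.
Proof.
  intros He Hq Hy. unfold Gn.
  assert (Rmin y1 (-e) <= Rmin y2 (-e)) by (unfold Rmin; repeat destruct Rle_dec; lra).
  assert (Rmin y2 (-e) <= -e) by apply Rmin_r.
  pose proof (negdiv_mono (qq s) _ _ Hq H ltac:(lra)). lra.
Qed.

Lemma Gn_e_mono hh qq c e e' s y : 0 < e' -> e' <= e -> 0 <= qq s ->
  Gn hh qq c e s y <= Gn hh qq c e' s y.
Proof.
  intros He Hee Hq. unfold Gn.
  assert (Rmin y (-e) <= Rmin y (-e')) by (unfold Rmin; repeat destruct Rle_dec; lra).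
  assert (Rmin y (-e') <= -e') by apply Rmin_r.
  pose proof (negdiv_mono (qq s) _ _ Hq H ltac:(lra)). lra.
Qed.

Lemma Gn_le_G hh qq c e s y : 0 < e -> 0 <= qq s -> y < 0 ->
  Gn hh qq c e s y <= hh s - c - qq s / y.
Proof.
  intros He Hq Hy. unfold Gn.
  assert (Rmin y (-e) <= y) by apply Rmin_l.
  pose proof (negdiv_mono (qq s) _ _ Hq H Hy). lra.
Qed.

Lemma Gn_eq hh qq c e s y : y <= - e -> Gn hh qq c e s y = hh s - c - qq s / y.
Proof. intros Hy. unfold Gn. rewrite Rmin_left by lra. reflexivity. Qed.

Lemma Gn_hi hh qq c e s y : - e <= y -> Gn hh qq c e s y = hh s - c + qq s / e.
Proof. intros Hy. unfold Gn. rewrite Rmin_right by lra. unfold Rdiv. rewrite Rinv_opp. ring. Qed.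

Lemma Gn_ge hh qq c e s y : 0 < e -> 0 <= qq s -> hh s - c <= Gn hh qq c e s y.
Proof.
  intros He Hq. unfold Gn.
  assert (Rmin y (-e) <= -e) by apply Rmin_r.
  assert (qq s / Rmin y (- e) <= 0).
  { unfold Rdiv. apply Rmult_le_0_l; auto. apply Rlt_le, Rinv_lt_0_compat. lra. }
  lra.
Qed.

Definition Sol (hh qq : R -> R) (c e : R) (y : R -> R) : Prop :=
  (forall x, continuity_pt y x) /\ y 1 = 0 /\
  forall x, 0 < x < 1 -> is_derive y x (Gn hh qq c e x (y x)).

Lemma sol_upper hh qq c e H y : 0 < e -> (forall x, 0 <= qq x) -> (forall x, Rabs (hh x - c) <= H) ->
  Sol hh qq c e y -> forall p, 0 <= p <= 1 -> y p <= H * (1 - p).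
Proof.
  intros He Hq Hh [Hc [H1 Hd]] p Hp.
  assert (A : (fun t => H * (1 - t) - y t) 1 <= (fun t => H * (1 - t) - y t) p).
  { apply (mono_le (fun t => H * (1 - t) - y t) (fun t => - H - Gn hh qq c e t (y t)) p 1); [lra| | |].
    - intros t Ht. apply (is_derive_minus (fun t => H * (1 - t)) y); [|apply Hd; lra].
      auto_derive; auto; ring.
    - intros t Ht. apply continuity_pt_minus; auto.
      apply (derive_cont_pt _ _ (-H)). auto_derive; auto; ring.
    - intros t Ht. pose proof (Gn_ge hh qq c e t (y t) He (Hq t)). specialize (Hh t).
      rewrite Rabs_le_between in Hh. lra. }
  simpl in A. rewrite H1 in A. lra.
Qed.

Lemma sol_mono hh qq c e e' y y' : 0 < e' -> e' <= e -> (forall x, 0 <= qq x) ->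
  Sol hh qq c e y -> Sol hh qq c e' y' -> forall p, 0 <= p <= 1 -> y' p <= y p.
Proof.
  intros He' Hee Hq [Hc [H1 Hd]] [Hc' [H1' Hd']] p Hp.
  destruct (Rle_dec (y' p) (y p)) as [|Hn]; auto. exfalso.
  assert (Hp1 : p < 1) by (destruct (Req_dec p 1) as [->|]; [rewrite H1, H1' in Hn; lra|lra]).
  assert (A : (fun t => y' t - y t) p <= (fun t => y' t - y t) 1).
  { apply (pos_up (fun t => y' t - y t) (fun t => Gn hh qq c e' t (y' t) - Gn hh qq c e t (y t)) p 1); [lra| | | |simpl; lra].
    - intros t Ht. apply (is_derive_minus y' y); [apply Hd'|apply Hd]; lra.
    - intros t Ht. apply continuity_pt_minus; auto.
    - intros t Ht Hpos.
      pose proof (Gn_mono hh qq c e' t (y t) (y' t) He' (Hq t) ltac:(lra)).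
      pose proof (Gn_e_mono hh qq c e e' t (y t) He' Hee (Hq t)). lra. }
  simpl in A. rewrite H1, H1' in A. lra.
Qed.

Lemma sol_sq hh qq c e H Qm Kb y : 0 < e -> (forall x, 0 <= qq x <= Qm) ->
  (forall x, Rabs (hh x - c) <= H) -> 0 <= H ->
  Sol hh qq c e y -> (forall t, 0 < t < 1 -> Rabs (y t) <= Kb) ->
  forall p, 0 <= p <= 1 -> y p * y p <= 2 * (H * Kb + Qm) * (1 - p).
Proof.
  intros He Hq Hh HH [Hc [H1 Hd]] HK p Hp.
  set (C := H * Kb + Qm).
  assert (A : (fun t => - (y t * y t / 2 + C * t)) 1 <= (fun t => - (y t * y t / 2 + C * t)) p).
  { apply (mono_le (fun t => - (y t * y t / 2 + C * t)) (fun t => - (y t * Gn hh qq c e t (y t) + C)) p 1); [lra| | |].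
    - intros t Ht. apply (is_derive_opp (fun t => y t * y t / 2 + C * t)).
      apply (is_derive_plus (fun t => y t * y t / 2) (fun t => C * t)).
      + pose proof (Hd t ltac:(lra)) as D.
        apply (is_derive_ext (fun t => / 2 * (y t * y t)) (fun t => y t * y t / 2)); [intros tt; simpl; unfold Rdiv; ring|].
        replace (y t * Gn hh qq c e t (y t)) with (/2 * (Gn hh qq c e t (y t) * y t + y t * Gn hh qq c e t (y t))) by field.
        apply (is_derive_scal (fun t => y t * y t)).
        apply (is_derive_mult (K := R_AbsRing) y y); auto. intros; apply Rmult_comm.
      + auto_derive; auto; ring.
    - intros t Ht. apply continuity_pt_opp, continuity_pt_plus.
      + apply continuity_pt_mult; [apply continuity_pt_mult; auto|apply continuity_pt_const; intros ??; auto].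
      + apply (derive_cont_pt _ _ C). auto_derive; auto; ring.
    - intros t Ht. assert (-C <= y t * Gn hh qq c e t (y t)); [|lra].
      specialize (HK t ltac:(lra)). specialize (Hq t). specialize (Hh t).
      assert (Hb1 : - (H * Kb) <= (hh t - c) * y t).
      { pose proof (Rabs_pos (y t)).
        assert (Rabs ((hh t - c) * y t) <= H * Kb).
        { rewrite Rabs_mult. apply Rmult_le_compat; auto; apply Rabs_pos. }
        rewrite Rabs_le_between in H2. lra. }
      unfold Gn.
      destruct (Rle_dec (y t) (-e)) as [Hle|Hgt].
      + rewrite Rmin_left by lra.
        replace (y t * (hh t - c - qq t / y t)) with ((hh t - c) * y t - qq t) by (field; lra).
        unfold C; lra.
      + rewrite Rmin_right by lra.
        replace (y t * (hh t - c - qq t / - e)) with ((hh t - c) * y t + qq t * (y t / e)) by (field; lra).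
        assert (- qq t <= qq t * (y t / e)).
        { assert (-1 <= y t / e).
          { apply (Rmult_le_reg_r e); [lra|]. unfold Rdiv. rewrite Rmult_assoc, Rinv_l by lra. lra. }
          nra. }
        unfold C; lra. }
  simpl in A. rewrite H1 in A. nra.
Qed.

Lemma sol_barrier hh qq c e y b db : 0 < e -> (forall x, 0 <= qq x) -> Sol hh qq c e y ->
  (forall t, 0 < t < 1 -> is_derive b t (db t)) -> (forall t, 0 <= t <= 1 -> continuity_pt b t) ->
  b 1 < 0 -> (forall t, 0 < t < 1 -> b t < 0 /\ hh t - c - qq t / b t < db t) ->
  forall t, 0 < t < 1 -> b t < y t.
Proof.
  intros He Hq [Hc [H1 Hd]] Hbd Hbc Hb1 Hbar t Ht.
  assert (b t - y t < 0); [|lra].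
  apply (strict_barrier (fun t => b t - y t) (fun t => db t - Gn hh qq c e t (y t)) 0 1); auto; try lra.
  - intros s Hs. apply (is_derive_minus b y); auto.
  - intros s Hs. apply continuity_pt_minus; auto.
  - intros s Hs Hg. destruct (Hbar s Hs) as [Hb0 Hb2].
    pose proof (Gn_mono hh qq c e s (y s) (b s) He (Hq s) ltac:(lra)).
    pose proof (Gn_le_G hh qq c e s (b s) He (Hq s) Hb0). lra.
Qed.

Lemma sol_neg hh qq c e H y a bb qm : 0 < e -> (forall x, 0 <= qq x) -> (forall x, Rabs (hh x - c) <= H) ->
  0 <= H -> Sol hh qq c e y -> 0 < a -> a < bb -> bb < 1 -> 0 < qm ->
  (forall t, a <= t <= (bb + 1) / 2 -> qm <= qq t) -> e <= 1/2 ->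
  H + 4 * (H + 1) / ((1 - bb) / 2) <= qm / e ->
  forall t, a <= t <= bb -> y t < - e.
Proof.
  intros He Hq Hh HH Hs Ha Hab Hb1 Hqm Hqmb He2 Hr t Ht.
  pose proof Hs as [Hc [H1 Hd]].
  set (b' := (bb + 1) / 2) in *.
  set (r := qm / e - H).
  assert (Hr0 : 4 * (H + 1) / ((1 - bb) / 2) <= r) by (unfold r; lra).
  assert (Hrb : H + 1 <= r * (b' - bb) / 4).
  { unfold b'. replace (r * ((bb + 1) / 2 - bb) / 4) with (r * ((1 - bb) / 2) / 4) by field.
    apply (Rmult_le_compat_r ((1 - bb) / 2 / 4)) in Hr0; [|lra].
    replace (4 * (H + 1) / ((1 - bb) / 2) * ((1 - bb) / 2 / 4)) with (H + 1) in Hr0 by (field; lra).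
    lra. }
  assert (Hrpos : 0 < r).
  { assert (0 < 4 * (H + 1) / ((1 - bb) / 2)) by (apply Rdiv_lt_0_compat; lra). lra. }
  assert (Hup : forall s, a <= s <= b' -> - e <= y s -> r <= Gn hh qq c e s (y s)).
  { intros s Hs0 Hys. rewrite Gn_hi by auto. specialize (Hh s). rewrite Rabs_le_between in Hh.
    assert (qm / e <= qq s / e).
    { unfold Rdiv. apply Rmult_le_compat_r; [apply Rlt_le, Rinv_0_lt_compat; lra|]. apply Hqmb; lra. }
    unfold r; lra. }
  destruct (Rlt_dec (y t) (-e)) as [|Hn]; auto. exfalso.
  assert (Hyt : -e <= y t) by lra.
  assert (Htl : 0 < t < 1) by lra.
  destruct (deriv_pos_step y t _ (Hd t Htl) ltac:(specialize (Hup t ltac:(unfold b'; lra) Hyt); lra)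
              ((b' - bb) / 2) ltac:(unfold b'; lra)) as [t' [Ht' Hyt']].
  assert (A : (fun s => y s + e - r / 2 * (s - t')) t' <= (fun s => y s + e - r / 2 * (s - t')) b').
  { apply (pos_up (fun s => y s + e - r / 2 * (s - t')) (fun s => Gn hh qq c e s (y s) - r / 2) t' b');
      [unfold b' in *; lra| | | |lra].
    - intros s Hs0. apply (is_derive_ext (fun s => y s + (e - r / 2 * (s - t')))); [intros; simpl; ring|].
      replace (Gn hh qq c e s (y s) - r / 2) with (Gn hh qq c e s (y s) + (- (r / 2))) by ring.
      apply (is_derive_plus (K := R_AbsRing) y (fun s => e - r / 2 * (s - t'))).
      + apply Hd. unfold b' in *; lra.
      + auto_derive; auto; ring.
    - intros s Hs0. apply continuity_pt_minus; [apply continuity_pt_plus; auto|].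
      + apply continuity_pt_const; intros ??; auto.
      + apply (derive_cont_pt _ _ (r / 2)). auto_derive; auto; ring.
    - intros s Hs0 Hg. assert (Hys : -e <= y s).
      { assert (0 <= r / 2 * (s - t')) by (apply Rmult_le_pos; lra). lra. }
      pose proof (Hup s ltac:(unfold b' in *; lra) Hys). lra. }
  simpl in A.
  pose proof (sol_upper hh qq c e H y He Hq Hh Hs b' ltac:(unfold b'; lra)).
  assert (r / 2 * (b' - t') >= r * (b' - bb) / 4).
  { unfold b' in *. nra. }
  assert (H * (1 - b') <= H) by (unfold b'; nra).
  lra.
Qed.

Lemma sol_unif hh qq c e e' y y' a bb : 0 < e' -> e' <= e -> (forall x, 0 <= qq x) ->
  Sol hh qq c e y -> Sol hh qq c e' y' -> 0 < a -> a <= bb -> bb < 1 ->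
  (forall t, a <= t <= bb -> y' t <= y t <= - e) ->
  forall t, a <= t <= bb -> y t - y' t <= y bb - y' bb.
Proof.
  intros He' Hee Hq [Hc [H1 Hd]] [Hc' [H1' Hd']] Ha Hab Hb Hord t Ht.
  assert (A : (fun s => - (y s - y' s)) bb <= (fun s => - (y s - y' s)) t).
  { apply (mono_le (fun s => - (y s - y' s)) (fun s => - (Gn hh qq c e s (y s) - Gn hh qq c e' s (y' s))) t bb);
      [lra| | |].
    - intros s Hs. apply (is_derive_opp (fun s => y s - y' s)). apply (is_derive_minus y y'); [apply Hd|apply Hd']; lra.
    - intros s Hs. apply continuity_pt_opp, continuity_pt_minus; auto.
    - intros s Hs. destruct (Hord s ltac:(lra)) as [O1 O2].
      rewrite (Gn_eq hh qq c e s (y s)) by lra. rewrite (Gn_eq hh qq c e' s (y' s)) by lra.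
      pose proof (negdiv_mono (qq s) (y' s) (y s) (Hq s) O1 ltac:(lra)). lra. }
  simpl in A. lra.
Qed.

Lemma small_inv (e : R) : 0 < e -> exists N : nat, / (INR N + 1) <= e.
Proof.
  intros He. destruct (archimed (/ e)) as [H1 _].
  assert (Hpos : (0 < up (/ e))%Z).
  { apply lt_IZR. pose proof (Rinv_0_lt_compat e He). simpl. lra. }
  exists (Z.to_nat (up (/ e))).
  rewrite INR_IZR_INZ, Z2Nat.id by lia.
  pose proof (Rinv_0_lt_compat e He).
  rewrite <- (Rinv_inv e) at 2.
  apply Rinv_le_contravar; [lra|]. lra.
Qed.

Lemma sq_lt_abs (z eps : R) : 0 < eps -> z * z < eps * eps -> Rabs z < eps.
Proof.
  intros He Hz. destruct (Rle_dec 0 z); [rewrite Rabs_right by lra|rewrite Rabs_left by lra]; nra.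
Qed.

Theorem lemma4p1 (f h q : R -> R) (c Sf Sq : R) :
  C1_on01 f h -> f 0 = 0 ->
  cond_q q ->
  is_lub (ratio_set f) Sf -> is_lub (ratio_set q) Sq ->
  c > Sf + 2 * sqrt Sq ->
  exists z : R -> R,
    cont_on01 z
    /\ (forall x, Io01 x ->
          is_derive z x (h x - c - q x / z x)
          /\ continuous (Derive z) x
          /\ z x < 0)
    /\ z 0 = 0 /\ z 1 = 0.
Proof.
  intros HC1 Hf0 Hq Hflub Hqlub Hc.
  destruct Hq as [Hqc [Hqpos [Hq0 [Hq1 _]]]].
  set (hh := fun x => h (clamp x)). set (qq := fun x => q (clamp x)). set (ff := fun x => f (clamp x)).
  assert (Hhc : forall x, continuity_pt hh x) by (apply cont01_clamp, (proj2 HC1)).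
  assert (Hqqc : forall x, continuity_pt qq x) by (apply cont01_clamp, Hqc).
  assert (Hffc : forall x, continuity_pt ff x) by (apply cont01_clamp, (C1_cont f h HC1)).
  assert (Hqq0 : forall x, 0 <= qq x).
  { intros x. unfold qq. pose proof (clamp_in x).
    destruct (Req_dec (clamp x) 0) as [->|H0]; [lra|].
    destruct (Req_dec (clamp x) 1) as [->|H1]; [lra|].
    apply Rlt_le, Hqpos. unfold Io01; lra. }
  destruct (bounded01 (fun x => hh x - c)) as [H [HH0 HH]].
  { intros x. apply continuity_pt_minus; auto. apply continuity_pt_const; intros ??; auto. }
  assert (Hh : forall x, Rabs (hh x - c) <= H).
  { intros x. replace (hh x) with (hh (clamp x)) by (unfold hh; rewrite clamp_idem; auto).
    apply HH, clamp_in. }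
  destruct (bounded01 qq Hqqc) as [Qm [HQ0 HQ]].
  assert (Hqb : forall x, 0 <= qq x <= Qm).
  { intros x. replace (qq x) with (qq (clamp x)) by (unfold qq; rewrite clamp_idem; auto).
    split; auto. pose proof (HQ _ (clamp_in x)). pose proof (Rle_abs (qq (clamp x))). lra. }
  destruct (bounded01 ff Hffc) as [Kf [HKf0 HKf]].
  assert (Hfle : forall p, 0 < p <= 1 -> f p <= Sf * p).
  { intros p Hp. destruct Hflub as [Hub _].
    assert (f p / p <= Sf) by (apply Hub; exists p; split; auto).
    replace (f p) with (f p / p * p) by (field; lra). apply Rmult_le_compat_r; lra. }
  assert (Hqle : forall p, 0 < p <= 1 -> q p <= Sq * p).
  { intros p Hp. destruct Hqlub as [Hub _].
    assert (q p / p <= Sq) by (apply Hub; exists p; split; auto).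
    replace (q p) with (q p / p * p) by (field; lra). apply Rmult_le_compat_r; lra. }
  assert (HSq0 : 0 <= Sq).
  { destruct Hqlub as [Hub _]. apply Hub. exists 1. split; [lra|]. rewrite Hq1. field. }
  pose proof (sqrt_pos Sq) as Hsq0. pose proof (sqrt_sqrt Sq HSq0) as Hsq.
  set (k := (c + Sf) / 2).
  assert (Hck : Sq < (c - k) * (k - Sf)).
  { unfold k. replace ((c - (c + Sf) / 2) * ((c + Sf) / 2 - Sf)) with (((c - Sf)/2) * ((c - Sf)/2)) by field.
    assert (sqrt Sq < (c - Sf) / 2) by lra. nra. }
  assert (Hkc : k < c) by (unfold k; lra). assert (HkSf : Sf < k) by (unfold k; lra).
  set (e := fun n : nat => / (INR n + 1)).
  assert (He : forall n, 0 < e n) by (intros n; unfold e; apply Rinv_0_lt_compat; pose proof (pos_INR n); lra).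
  assert (HeS : forall n m, (n <= m)%nat -> e m <= e n).
  { intros n m Hnm. unfold e. apply Rinv_le_contravar; [pose proof (pos_INR n); lra|].
    apply le_INR in Hnm. lra. }
  set (y := fun n => ysol (Gn hh qq c (e n))).
  assert (HSol : forall n, Sol hh qq c (e n) (y n)).
  { intros n. unfold Sol, y.
    apply (ysol_spec _ (Qm / (e n * e n) + 1) (H + Qm / e n)).
    - apply Gn_cont; auto.
    - assert (0 <= Qm / (e n * e n)); [|lra].
      apply Rmult_le_pos; auto. apply Rlt_le, Rinv_0_lt_compat. pose proof (He n); nra.
    - apply Gn_lip; auto.
    - apply Gn_bnd; auto. }
  clearbody y.
  set (b := fun p => ff p - k * p).
  assert (Hbc : forall t, continuity_pt b t).
  { intros t. unfold b. apply continuity_pt_minus; auto.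
    apply (derive_cont_pt _ _ k). auto_derive; auto; ring. }
  assert (Hbneg : forall t, 0 < t <= 1 -> b t < 0).
  { intros t Ht. unfold b, ff. rewrite clamp_id by lra. pose proof (Hfle t Ht). nra. }
  assert (Hyb : forall n t, 0 < t < 1 -> b t < y n t).
  { intros n. apply (sol_barrier hh qq c (e n) (y n) b (fun t => h t - k)); auto.
    - intros t Ht. unfold b. apply (is_derive_minus ff (fun p => k * p)).
      + apply C1_deriv; auto.
      + auto_derive; auto; ring.
    - apply Hbneg; lra.
    - intros t Ht. split; [apply Hbneg; lra|].
      unfold hh, qq. rewrite clamp_id by lra.
      assert (Hb0 : b t < 0) by (apply Hbneg; lra).
      assert (Hbt : b t <= (Sf - k) * t).
      { unfold b, ff. rewrite clamp_id by lra. pose proof (Hfle t ltac:(lra)). lra. }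
      assert (Hqt : q t <= Sq * t) by (apply Hqle; lra).
      assert (Hlt : q t < (c - k) * (- b t)).
      { apply Rle_lt_trans with (Sq * t); auto.
        apply Rlt_le_trans with ((c - k) * (k - Sf) * t); [nra|]. nra. }
      assert (q t / b t > k - c); [|lra].
      replace (q t / b t) with (- (q t / (- b t))) by (field; lra).
      assert (q t / (- b t) < c - k); [|lra].
      apply (Rmult_lt_reg_r (- b t)); [lra|].
      replace (q t / - b t * - b t) with (q t) by (field; lra). lra. }
  assert (Hmono : forall n m p, (n <= m)%nat -> 0 <= p <= 1 -> y m p <= y n p).
  { intros n m p Hnm Hp. apply (sol_mono hh qq c (e n) (e m)); auto. }
  assert (Hup : forall n p, 0 <= p <= 1 -> y n p <= H * (1 - p)).
  { intros n p Hp. apply (sol_upper hh qq c (e n) H); auto. }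
  set (Kb := H + Kf + Rabs k).
  assert (HKb : forall n t, 0 < t < 1 -> Rabs (y n t) <= Kb).
  { intros n t Ht. pose proof (Hyb n t Ht). pose proof (Hup n t ltac:(lra)).
    pose proof (HKf t ltac:(lra)). unfold b in H0.
    assert (Rabs (k * t) <= Rabs k) by (rewrite Rabs_mult, (Rabs_right t) by lra; pose proof (Rabs_pos k); nra).
    rewrite Rabs_le_between in H3, H2 |- *. unfold Kb. nra. }
  set (C0 := H * Kb + Qm).
  assert (Hsq2 : forall n p, 0 <= p <= 1 -> y n p * y n p <= 2 * C0 * (1 - p)).
  { intros n p Hp. apply (sol_sq hh qq c (e n) H Qm Kb); auto. }
  assert (HC0 : 0 <= C0) by (unfold C0, Kb; pose proof (Rabs_pos k); nra).
  set (yl := fun p => real (Lim_seq (fun n => y n p))).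
  assert (Hyl : forall p, 0 < p <= 1 -> is_lim_seq (fun n => y n p) (yl p)).
  { intros p Hp.
    assert (Hex : ex_finite_lim_seq (fun n => y n p)).
    { destruct (Req_dec p 1) as [->|Hp1].
      - exists 0. apply (is_lim_seq_ext (fun _ => 0)); [intros n; symmetry; apply (HSol n)|].
        apply is_lim_seq_const.
      - apply (ex_finite_lim_seq_decr _ (b p)).
        + intros n. apply Hmono; [lia|lra].
        + intros n. apply Rlt_le, Hyb; lra. }
    destruct Hex as [l Hl]. unfold yl. rewrite (is_lim_seq_unique _ _ Hl). exact Hl. }
  assert (Hyl1 : yl 1 = 0).
  { unfold yl. rewrite (Lim_seq_ext _ (fun _ => 0)) by (intros n; apply (HSol n)).
    rewrite Lim_seq_const. reflexivity. }
  assert (Hylb : forall p, 0 < p < 1 -> b p <= yl p).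
  { intros p Hp. apply (lim_ge_aux _ _ _ 0 (Hyl p ltac:(lra))). intros n _. apply Rlt_le, Hyb; lra. }
  assert (Hylle : forall n p, 0 < p <= 1 -> yl p <= y n p).
  { intros n p Hp. apply (lim_le_aux _ _ _ n (Hyl p Hp)). intros m Hm. apply Hmono; auto; lra. }
  assert (Hylsq : forall p, 0 < p <= 1 -> yl p * yl p <= 2 * C0 * (1 - p)).
  { intros p Hp. apply (lim_le_aux (fun n => y n p * y n p) _ _ 0).
    - apply is_lim_seq_mult'; apply Hyl; auto.
    - intros n _. apply Hsq2; lra. }
  assert (Hloc : forall x, 0 < x < 1 -> exists a bb N, 0 < a < x /\ x < bb < 1 /\
            forall n, (N <= n)%nat -> forall t, a <= t <= bb -> y n t <= - e N).
  { intros x Hx. set (a := x / 2). set (bb := (x + 1) / 2).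
    destruct (continuity_ab_min qq a ((bb + 1) / 2) ltac:(unfold a, bb; lra) (fun c _ => Hqqc c))
      as [xm [Hxm Hxm2]].
    set (qm := qq xm).
    assert (Hqm : 0 < qm).
    { unfold qm, qq. rewrite clamp_id by (unfold a, bb in Hxm2; lra). apply Hqpos.
      unfold Io01, a, bb in *; lra. }
    set (A := 4 * (H + 1) / ((1 - bb) / 2)).
    assert (HA : 0 < A) by (unfold A, bb; apply Rdiv_lt_0_compat; lra).
    set (e0 := Rmin (1/2) (qm / (H + A))).
    assert (He0 : 0 < e0) by (apply Rmin_glb_lt; [lra|apply Rdiv_lt_0_compat; lra]).
    destruct (small_inv e0 He0) as [N HN]. fold (e N) in HN.
    exists a, bb, N. split; [unfold a; lra|]. split; [unfold bb; lra|].
    assert (HyN : forall t, a <= t <= bb -> y N t < - e N).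
    { apply (sol_neg hh qq c (e N) H (y N) a bb qm); auto; try (unfold a, bb; lra).
      - unfold e0 in HN. pose proof (Rmin_l (1/2) (qm / (H + A))). lra.
      - fold A. unfold e0 in HN. pose proof (Rmin_r (1/2) (qm / (H + A))).
        assert (Hx1 : (H + A) * e N <= qm).
        { apply Rle_trans with ((H + A) * (qm / (H + A))).
          - apply Rmult_le_compat_l; lra.
          - right. field. lra. }
        apply (Rmult_le_reg_r (e N)); auto. unfold Rdiv. rewrite Rmult_assoc, Rinv_l by (pose proof (He N); lra). lra. }
    intros n Hn t Ht. apply Rle_trans with (y N t).
    - apply Hmono; auto. unfold a, bb in Ht; lra.
    - apply Rlt_le, HyN; auto. }
  assert (Hunif : forall a bb N, 0 < a -> a <= bb -> bb < 1 ->
            (forall n, (N <= n)%nat -> forall t, a <= t <= bb -> y n t <= - e N) ->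
            forall eps, 0 < eps -> exists M, (N <= M)%nat /\ forall n, (M <= n)%nat ->
            forall t, a <= t <= bb -> 0 <= y n t - yl t <= eps).
  { intros a bb N Ha Hab Hb HN eps Heps.
    assert (Hd : forall n t, (N <= n)%nat -> a <= t <= bb -> y n t - yl t <= y n bb - yl bb).
    { intros n t Hn Ht.
      assert (Hm : forall m, (n <= m)%nat -> y n t - y m t <= y n bb - y m bb).
      { intros m Hm. apply (sol_unif hh qq c (e n) (e m) (y n) (y m) a bb); auto; try lra.
        intros s Hs. split; [apply Hmono; auto; lra|].
        pose proof (HN n Hn s Hs). pose proof (HeS N n Hn). lra. }
      assert (Hl1 : is_lim_seq (fun m => y n t - y m t) (y n t - yl t)).
      { apply (is_lim_seq_minus _ _ (y n t) (yl t)); [apply is_lim_seq_const|apply Hyl; lra|reflexivity]. }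
      assert (Hl2 : is_lim_seq (fun m => y n bb - y m bb) (y n bb - yl bb)).
      { apply (is_lim_seq_minus _ _ (y n bb) (yl bb)); [apply is_lim_seq_const|apply Hyl; lra|reflexivity]. }
      assert (Hl3 := is_lim_seq_minus _ _ _ _ (y n bb - yl bb - (y n t - yl t)) Hl2 Hl1 eq_refl).
      assert (0 <= y n bb - yl bb - (y n t - yl t)); [|lra].
      apply (lim_ge_aux _ _ _ n Hl3). intros m Hm'. specialize (Hm m Hm'). lra. }
    pose proof (Hyl bb ltac:(lra)) as Hlb.
    apply is_lim_seq_spec in Hlb. destruct (Hlb (mkposreal _ Heps)) as [M0 HM0].
    exists (max N M0). split; [lia|]. intros n Hn t Ht.
    split.
    - pose proof (Hylle n t ltac:(lra)). lra.
    - eapply Rle_trans; [apply Hd; auto; lia|].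
      assert (Hnb : y n bb <= y (max N M0) bb) by (apply Hmono; lra || lia).
      specialize (HM0 (max N M0) ltac:(lia)). simpl in HM0. rewrite Rabs_lt_between in HM0. lra. }
  assert (Hreg : forall x, 0 < x < 1 ->
            yl x < 0 /\ continuity_pt yl x /\ is_derive yl x (hh x - c - qq x / yl x)).
  { intros x Hx. destruct (Hloc x Hx) as [a [bb [N [Ha [Hb HN]]]]].
    assert (HylN : forall t, a <= t <= bb -> yl t <= - e N).
    { intros t Ht. pose proof (Hylle N t ltac:(lra)). pose proof (HN N (le_n N) t Ht). lra. }
    assert (Hneg : yl x < 0) by (pose proof (HylN x ltac:(lra)); pose proof (He N); lra).
    assert (Hcont : continuity_pt yl x).
    { apply (unif_cont y yl a bb x); [lra|intros n; apply (HSol n)|].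
      intros eps Heps. destruct (Hunif a bb N ltac:(lra) ltac:(lra) ltac:(lra) HN eps Heps) as [M [HM1 HM2]].
      exists M. intros n Hn t Ht. specialize (HM2 n Hn t ltac:(lra)). rewrite Rabs_right; lra. }
    split; auto. split; auto.
    apply (deriv_limit y (fun n t => Gn hh qq c (e n) t (y n t)) yl (fun t => hh t - c - qq t / yl t) a bb x);
      [lra| | | |].
    - intros n t Ht. apply (HSol n). lra.
    - intros t Ht. apply Hyl. lra.
    - intros eps Heps. set (L := Qm / (e N * e N) + 1).
      assert (HL : 0 < L).
      { unfold L. assert (0 <= Qm / (e N * e N)); [|lra].
        apply Rmult_le_pos; auto. apply Rlt_le, Rinv_0_lt_compat. pose proof (He N); nra. }
      destruct (Hunif a bb N ltac:(lra) ltac:(lra) ltac:(lra) HN (eps / L) ltac:(apply Rdiv_lt_0_compat; lra))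
        as [M [HM1 HM2]].
      exists M. intros n Hn t Ht.
      specialize (HM2 n Hn t ltac:(lra)).
      assert (Hyn : y n t <= - e N) by (apply HN; lia || lra).
      assert (Hylt : yl t <= - e N) by (apply HylN; lra).
      pose proof (HeS N n ltac:(lia)).
      rewrite (Gn_eq hh qq c (e n) t (y n t)) by lra.
      rewrite <- (Gn_eq hh qq c (e N) t (y n t)) by lra.
      rewrite <- (Gn_eq hh qq c (e N) t (yl t)) by lra.
      eapply Rle_trans; [apply (Gn_lip hh qq c (e N) Qm (He N) Hqb)|].
      fold L. rewrite Rabs_right by lra.
      apply Rle_trans with (L * (eps / L)); [apply Rmult_le_compat_l; lra|right; field; lra].
    - apply continuity_pt_minus.
      + apply continuity_pt_minus; auto. apply continuity_pt_const; intros ??; auto.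
      + apply continuity_pt_div; auto. lra. }
  set (z := fun p => if Rle_dec p 0 then 0 else yl p).
  assert (Hzp : forall p, 0 < p -> z p = yl p).
  { intros p Hp. unfold z. destruct (Rle_dec p 0); [lra|auto]. }
  assert (Hz0 : z 0 = 0) by (unfold z; destruct (Rle_dec 0 0); [auto|lra]).
  assert (Hz1 : z 1 = 0) by (rewrite Hzp by lra; auto).
  assert (Hzloc : forall x, 0 < x -> locally x (fun t => yl t = z t)).
  { intros x Hx. exists (mkposreal _ Hx). intros t Ht. simpl in Ht.
    unfold ball in Ht; simpl in Ht; unfold AbsRing_ball, abs, minus, plus, opp in Ht; simpl in Ht.
    rewrite Rabs_lt_between in Ht. rewrite Hzp; auto. lra. }
  assert (Hzd : forall x, 0 < x < 1 -> is_derive z x (hh x - c - qq x / yl x)).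
  { intros x Hx. apply (is_derive_ext_loc yl); [apply Hzloc; lra|apply Hreg; auto]. }
  assert (Hgc : forall x, 0 < x < 1 -> continuity_pt (fun t => hh t - c - qq t / yl t) x).
  { intros x Hx. destruct (Hreg x Hx) as [Hn [Hcx _]].
    apply continuity_pt_minus.
    + apply continuity_pt_minus; auto. apply continuity_pt_const; intros ??; auto.
    + apply continuity_pt_div; auto. lra. }
  exists z. split; [|split; [|split; auto]].
  - intros x Hx. unfold I01 in Hx. apply eps_within. intros eps Heps.
    destruct (Req_dec x 0) as [->|Hx0]; [|destruct (Req_dec x 1) as [->|Hx1]].
    + destruct (cont_eps b 0 (Hbc 0) eps Heps) as [d [Hd Hd2]].
      exists (Rmin d (1/2)). split; [apply Rmin_glb_lt; lra|].
      intros p Hp Hpd. rewrite Hz0, Rminus_0_r.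
      pose proof (Rmin_l d (1/2)). pose proof (Rmin_r d (1/2)).
      unfold I01 in Hp. destruct (Req_dec p 0) as [->|Hp0].
      * rewrite Hz0, Rabs_R0; auto.
      * rewrite Rminus_0_r, Rabs_right in Hpd by lra.
        rewrite Hzp by lra.
        assert (Hb0 : b 0 = 0) by (unfold b, ff; rewrite clamp_id by lra; rewrite Hf0; ring).
        specialize (Hd2 p ltac:(rewrite Rminus_0_r, Rabs_right; lra)). rewrite Hb0, Rminus_0_r in Hd2.
        pose proof (Hylb p ltac:(lra)). destruct (Hreg p ltac:(lra)) as [Hn _].
        rewrite Rabs_left in Hd2 |- * by lra. lra.
    + exists (eps * eps / (2 * C0 + 1)). split.
      { apply Rdiv_lt_0_compat; nra. }
      intros p Hp Hpd. rewrite Hz1, Rminus_0_r. unfold I01 in Hp.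
      destruct (Req_dec p 0) as [->|Hp0]; [rewrite Hz0, Rabs_R0; auto|].
      rewrite Hzp by lra. apply sq_lt_abs; auto.
      rewrite Rabs_left1 in Hpd by lra.
      eapply Rle_lt_trans; [apply Hylsq; lra|].
      assert (Hq2 : 1 - p < eps * eps / (2 * C0 + 1)) by lra.
      apply Rle_lt_trans with (2 * C0 * (eps * eps / (2 * C0 + 1))).
      * apply Rmult_le_compat_l; lra.
      * apply (Rmult_lt_reg_r (2 * C0 + 1)); [lra|].
        replace (2 * C0 * (eps * eps / (2 * C0 + 1)) * (2 * C0 + 1)) with (2 * C0 * (eps * eps)) by (field; lra).
        nra.
    + assert (Hcz : continuity_pt z x).
      { apply (continuity_pt_ext_loc yl); [apply Hzloc; lra|apply Hreg; lra]. }
      destruct (cont_eps z x Hcz eps Heps) as [d [Hd Hd2]].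
      exists d; split; auto.
  - intros x Hx. unfold Io01 in Hx.
    assert (Ex : hh x - c - qq x / yl x = h x - c - q x / z x).
    { unfold hh, qq. rewrite clamp_id by lra. rewrite Hzp by lra. reflexivity. }
    split; [|split].
    + rewrite <- Ex. apply Hzd; auto.
    + apply (continuous_ext_loc (Derive z) (fun t => hh t - c - qq t / yl t)).
      * assert (Hd : 0 < Rmin x (1 - x)) by (apply Rmin_glb_lt; lra).
        exists (mkposreal _ Hd). intros t Ht. simpl in Ht.
        unfold ball in Ht; simpl in Ht; unfold AbsRing_ball, abs, minus, plus, opp in Ht; simpl in Ht.
        pose proof (Rmin_l x (1 - x)). pose proof (Rmin_r x (1 - x)).
        rewrite Rabs_lt_between in Ht.
        symmetry. apply is_derive_unique. apply Hzd. lra.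
      * apply cont_to_coq. apply Hgc; auto.
    + rewrite Hzp by lra. apply Hreg; auto.
Qed.
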